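(* Let $S$ be a finite set of anchored rectangles in the plane, where the $x$-coordinates of the top-right vertices are pairwise distinct (and likewise their $y$-coordinates). Store $S$ in a leaf-oriented red-black tree $\mathcal{T}$ keyed by $r_x$, and color each $r\in S$ by $\mathit{col}(r):=\max_{v\in N(r)}\mathrm{height}(v)$, where $N(r)$ consists of the leaf storing $r$ together with all internal nodes $v$ with $r_{\max}(\mathit{right}(v))=r$. Then this coloring is conflict-free with respect to points: for every point $q\in\mathbb{R}^2$ contained in at least one rectangle of $S$, some rectangle of $S$ containing $q$ has a color that no other rectangle of $S$ containing $q$ has.
   Context: A rectangle is anchored if its bottom-left vertex is the origin; for such a rectangle $r$, $(r_x,r_y)$ denotes its top-right vertex. A leaf-oriented red-black tree stores the keys in its leaves (one rectangle per leaf, ordered by $r_x$), and each internal node stores a splitting value strictly between consecutive keys, with keys smaller than it in the left subtree and larger in the right subtree. For a node $v$, $\mathit{left}(v)$, $\mathit{right}(v)$ denote its children, $S(v)$ is the set of rectangles stored in leaves of the subtree rooted at $v$, $r_{\max}(v)$ is the rectangle $r\in S(v)$ maximizing $r_y$, and $\mathrm{height}(v)$ is the height of the subtree rooted at $v$ (0 for a leaf). *)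

(* Defs.v *)
From mathcomp Require Import all_boot all_order all_algebra.
Set Implicit Arguments. Unset Strict Implicit. Unset Printing Implicit Defensive.
Import Order.TTheory GRing.Theory Num.Theory.
Local Open Scope ring_scope.

(* An anchored rectangle r is represented by its top-right vertex (r_x, r_y);
   it is the closed box [0, r_x] x [0, r_y]. *)
Definition anchored (R : realFieldType) (r : R * R) : bool := (0 < r.1) && (0 < r.2).

Definition in_rect (R : realFieldType) (r q : R * R) : bool :=
  [&& 0 <= q.1, q.1 <= r.1, 0 <= q.2 & q.2 <= r.2].

Inductive rbcolor := Red | Black.

Inductive tree (R : realFieldType) :=
| Leaf of R * R
| Node of rbcolor & R & tree R & tree R.
Arguments Leaf {R}.
Arguments Node {R}.

Section Trees.
Variable R : realFieldType.

Fixpoint leaves (t : tree R) : seq (R * R) :=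
  match t with Leaf r => [:: r] | Node _ _ l rt => leaves l ++ leaves rt end.

Fixpoint height (t : tree R) : nat :=
  match t with Leaf _ => 0%N | Node _ _ l rt => (maxn (height l) (height rt)).+1 end.

Fixpoint is_search_tree (t : tree R) : bool :=
  match t with
  | Leaf _ => true
  | Node _ s l rt =>
      [&& is_search_tree l, is_search_tree rt,
          all (fun p => p.1 < s) (leaves l) & all (fun p => s < p.1) (leaves rt)]
  end.

Definition is_black (c : rbcolor) : bool := if c is Black then true else false.

Definition node_color (t : tree R) : rbcolor :=
  match t with Leaf _ => Black | Node c _ _ _ => c end.

(* number of black internal nodes on every root-to-leaf path (if balanced) *)
Fixpoint black_height (t : tree R) : nat :=
  match t with
  | Leaf _ => 0%N
  | Node c _ l _ => (black_height l + (if c is Black then 1 else 0))%N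
  end.

Fixpoint rb_valid (t : tree R) : bool :=
  match t with
  | Leaf _ => true
  | Node c _ l rt =>
      [&& rb_valid l, rb_valid rt, black_height l == black_height rt &
          (if c is Red then is_black (node_color l) && is_black (node_color rt)
           else true)]
  end.

Definition red_black (t : tree R) : bool := rb_valid t && is_black (node_color t).

Definition is_rmax (t : tree R) (r : R * R) : bool :=
  (r \in leaves t) && all (fun p => p.2 <= r.2) (leaves t).

(* col(r) = max over v in N(r) of height(v), where N(r) = the leaf storing r
   (height 0) together with the internal nodes v with r_max(right v) = r. *)
Fixpoint rect_col (t : tree R) (r : R * R) : nat :=
  match t with
  | Leaf _ => 0%N
  | Node _ _ l rt =>
      maxn (maxn (rect_col l r) (rect_col rt r)) (if is_rmax rt r then height t else 0%N)
  end.

End Trees.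

(* Main.v *)
Require Import Defs.
From mathcomp Require Import all_boot all_order all_algebra.
From mathcomp Require Import zify.
Import Order.TTheory GRing.Theory Num.Theory.
Local Open Scope ring_scope.

Section Aux.
Variable R : realFieldType.

Lemma col_le_height (t : tree R) r : (rect_col t r <= height t)%N.
Proof.
elim: t => [a|c s l IHl rt IHr] //=.
case: (is_rmax rt r); lia.
Qed.

Lemma col_notin (t : tree R) r : r \notin leaves t -> rect_col t r = 0%N.
Proof.
elim: t => [a|c s l IHl rt IHr] //=.
rewrite mem_cat negb_or => /andP [Hl Hr].
rewrite IHl // IHr // /is_rmax (negbTE Hr) /=. by [].
Qed.

Lemma rmax_ex (t : tree R) : exists m, is_rmax t m.
Proof.
elim: t => [a|c s l [ml Hl] rt [mr Hr]].
  by exists a; rewrite /is_rmax /= mem_seq1 eqxx /= lexx.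
move: Hl Hr; rewrite /is_rmax /= => /andP [Hml Hal] /andP [Hmr Har].
case: (leP ml.2 mr.2) => H.
  exists mr; rewrite mem_cat Hmr orbT /= all_cat Har andbT.
  apply/allP => p Hp; exact: le_trans ((allP Hal) p Hp) H.
exists ml; rewrite mem_cat Hml /= all_cat Hal /=.
apply/allP => p Hp; exact: le_trans ((allP Har) p Hp) (ltW H).
Qed.

Lemma uniq_map_eq (T U : eqType) (f : T -> U) (s : seq T) x y :
  uniq (map f s) -> x \in s -> y \in s -> f x = f y -> x = y.
Proof.
elim: s => [|a s IH] //= /andP [Ha Hu].
rewrite !in_cons => /orP [/eqP->|Hx] /orP [/eqP->|Hy] // E.
- by move: Ha; rewrite E (map_f f Hy).
- by move: Ha; rewrite -E (map_f f Hx).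
- exact: IH.
Qed.

Lemma rmax_uniq (t : tree R) a b :
  uniq (map snd (leaves t)) -> is_rmax t a -> is_rmax t b -> a = b.
Proof.
rewrite /is_rmax => Hu /andP [Ha Haa] /andP [Hb Hbb].
apply: (@uniq_map_eq _ _ snd _ a b Hu Ha Hb).
apply/eqP; rewrite eq_le; apply/andP; split.
  exact: (allP Hbb) a Ha.
exact: (allP Haa) b Hb.
Qed.

Arguments rmax_uniq {t a b}.
Arguments col_notin {t r}.

Lemma main_lemma (q : R * R) (t : tree R) :
  is_search_tree t -> uniq (map snd (leaves t)) ->
  has (fun r => in_rect r q) (leaves t) ->
  exists r, [/\ r \in leaves t, in_rect r q &
    forall r', r' \in leaves t -> in_rect r' q -> r' != r ->
      (rect_col t r' < rect_col t r)%N].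
Proof.
elim: t => [a | c s l IHl rt IHr].
  rewrite /= orbF => _ _ Ha; exists a; split => //; first by rewrite mem_seq1.
  by move=> r'; rewrite mem_seq1 => /eqP ->; rewrite eqxx.
rewrite /= => /and4P [Hsl Hsr Hal Har].
rewrite map_cat cat_uniq => /and3P [Hul _ Hur].
rewrite has_cat => Hhas.
have notr : forall p, p \in leaves l -> p \notin leaves rt.
  move=> p Hp; apply/negP => Hp'.
  have := (allP Hal) p Hp; have := (allP Har) p Hp'.
  by move=> H1 H2; move: (lt_trans H1 H2); rewrite ltxx.
have notl : forall p, p \in leaves rt -> p \notin leaves l.
  by move=> p Hp; apply/negP => Hp'; move: (notr p Hp'); rewrite Hp.
have [m Hm] := rmax_ex rt.
have Hmrt : m \in leaves rt by case/andP: Hm.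
have bonus : forall r', is_rmax rt r' -> r' = m.
  by move=> r' H; exact: (rmax_uniq Hur H Hm).
have Hlh := col_le_height l; have Hrh := col_le_height rt.
case Hmq: (in_rect m q).
  exists m; split => //; first by rewrite mem_cat Hmrt orbT.
  move=> r' _ _ Hne.
  have Hb : is_rmax rt r' = false.
    by apply/negP => /bonus E; move: Hne; rewrite E eqxx.
  rewrite Hb Hm.
  move: (Hlh r') (Hrh r') => A B; rewrite /=; clear -A B; lia.
have Hboth : ~~ (has (fun r => in_rect r q) (leaves l) &&
                 has (fun r => in_rect r q) (leaves rt)).
  apply/negP => /andP [/hasP [e He Heq] /hasP [e' He' He'q]].
  move: Hmq; rewrite /in_rect.
  move: Heq He'q; rewrite /in_rect => /and4P [H1 H2 H3 H4] /and4P [_ _ _ H8].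
  case/andP: Hm => _ Hall.
  have Hm2 := (allP Hall) e' He'.
  have Hs1 := (allP Hal) e He.
  have Hs2 := (allP Har) m Hmrt.
  rewrite H1 H3 /= (le_trans H8 Hm2) andbT.
  by rewrite (le_trans H2 (ltW (lt_trans Hs1 Hs2))).
have Hb : forall r', in_rect r' q -> is_rmax rt r' = false.
  by move=> r' Hr'; apply/negP => /bonus E; move: Hmq; rewrite -E Hr'.
case/orP: Hhas => [El | Er].
  have Er : ~~ has (fun r => in_rect r q) (leaves rt) by move: Hboth; rewrite El.
  have [r [Hr Hrq Hmax]] := IHl Hsl Hul El.
  exists r; split => //; first by rewrite mem_cat Hr.
  have inl : forall r', r' \in leaves l ++ leaves rt -> in_rect r' q -> r' \in leaves l.
    move=> r'; rewrite mem_cat => /orP [//|H] Hq.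
    by move: Er; rewrite (introT hasP (ex_intro2 _ _ r' H Hq)).
  move=> r' Hr' Hq' Hne.
  have Hl' := inl r' Hr' Hq'.
  rewrite (Hb r' Hq') (Hb r Hrq) (col_notin (notr _ Hl')) (col_notin (notr _ Hr)).
  move: (Hmax r' Hl' Hq' Hne) => A; rewrite /=; clear -A; lia.
have El : ~~ has (fun r => in_rect r q) (leaves l)
  by move: Hboth; rewrite Er andbT.
have [r [Hr Hrq Hmax]] := IHr Hsr Hur Er.
exists r; split => //; first by rewrite mem_cat Hr orbT.
have inr : forall r', r' \in leaves l ++ leaves rt -> in_rect r' q -> r' \in leaves rt.
  move=> r'; rewrite mem_cat => /orP [H|//] Hq.
  by move: El; rewrite (introT hasP (ex_intro2 _ _ r' H Hq)).
move=> r' Hr' Hq' Hne.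
have Hr'' := inr r' Hr' Hq'.
rewrite (Hb r' Hq') (Hb r Hrq) (col_notin (notl _ Hr'')) (col_notin (notl _ Hr)).
move: (Hmax r' Hr'' Hq' Hne) => A; rewrite /=; clear -A; lia.
Qed.

End Aux.

Theorem mainTheorem1 (R : realFieldType) (S : seq (R * R)) (T : tree R) :
  all (@anchored R) S ->
  uniq [seq r.1 | r <- S] ->
  uniq [seq r.2 | r <- S] ->
  red_black T -> is_search_tree T -> perm_eq (leaves T) S ->
  forall q : R * R,
    has (fun r => in_rect r q) S ->
    exists2 r, (r \in S) && in_rect r q &
      forall r', r' \in S -> in_rect r' q -> r' != r -> rect_col T r' != rect_col T r.
Proof.
move=> _ _ Hu2 _ Hst Hp q Hhas.
have Hu : uniq (map snd (leaves T)).
  by rewrite (perm_uniq (perm_map snd Hp)).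
have Hh : has (fun r => in_rect r q) (leaves T) by rewrite (perm_has _ Hp).
have [r [Hr Hrq Hmax]] := @main_lemma _ q _ Hst Hu Hh.
exists r; first by rewrite -(perm_mem Hp) Hr Hrq.
move=> r' Hr' Hq' Hne.
have Hr'' : r' \in leaves T by rewrite (perm_mem Hp).
have := Hmax r' Hr'' Hq' Hne.
by rewrite ltn_neqAle => /andP [].
Qed.
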